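(* Let $\chi:\mathcal H\to\mathcal H_L^\chi\otimes\mathcal H_R^\chi$ be a splitting map. The set $\mathrm{stloc}(\chi)$ of strictly $\chi$-local operators is a Von Neumann subalgebra of $\mathcal L(\mathcal H)$.
   Context: All Hilbert spaces are finite-dimensional and complex. A Von Neumann subalgebra of $\mathcal L(\mathcal H)$ is a $*$-subalgebra closed under adjoint and containing $\mathbb 1_{\mathcal H}$. A splitting map on $\mathcal H$ is an isometry $\chi:\mathcal H\to\mathcal H_L^\chi\otimes\mathcal H_R^\chi$. $A\in\mathcal L(\mathcal H)$ is strictly $\chi$-local if there exists $\tilde A\in\mathcal L(\mathcal H_L^\chi)$ with $A\chi^\dagger=\chi^\dagger(\tilde A\otimes\mathbb 1)$ and $\chi A=(\tilde A\otimes\mathbb 1)\chi$. *)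

(* Defs.v *)
(* Complex numbers: R[i] = complex R for R : realType
   (mathcomp-real-closed's complex.v); matrices represent operators on
   finite-dimensional Hilbert spaces C^n with the standard inner product. *)
From mathcomp Require Import all_boot all_order all_algebra.
From mathcomp Require Import complex mxtens.
From mathcomp Require Import reals.
Set Implicit Arguments. Unset Strict Implicit. Unset Printing Implicit Defensive.
Import GRing.Theory Num.Theory.
Local Open Scope ring_scope.

Definition adjmx {C : numClosedFieldType} {m n : nat} (A : 'M[C]_(m, n))
  : 'M[C]_(n, m) := (map_mx Num.conj A)^T.

(* A splitting map H = C^n -> H_L (x) H_R = C^a (x) C^b = C^(a*b)
   (Kronecker ordering) is an isometry: chi^dagger chi = 1. *)
Definition splitting_map {C : numClosedFieldType} {n a b : nat}
  (chi : 'M[C]_(a * b, n)) : Prop := adjmx chi *m chi = 1%:M.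

Definition strictly_local {C : numClosedFieldType} {n a b : nat}
  (chi : 'M[C]_(a * b, n)) (A : 'M[C]_n) : Prop :=
  exists At : 'M[C]_a,
    A *m adjmx chi = adjmx chi *m (At *t (1%:M : 'M[C]_b)) /\
    chi *m A = (At *t (1%:M : 'M[C]_b)) *m chi.

Definition stloc {C : numClosedFieldType} {n a b : nat}
  (chi : 'M[C]_(a * b, n)) : 'M[C]_n -> Prop := strictly_local chi.

(* Von Neumann subalgebra of L(C^n) (finite-dim.): a *-subalgebra, i.e. a
   complex linear subspace closed under products and adjoints, containing 1. *)
Definition von_neumann_subalgebra {C : numClosedFieldType} {n : nat}
  (S : 'M[C]_n -> Prop) : Prop :=
  [/\ S 1%:M,
      forall A B, S A -> S B -> S (A + B),
      forall (c : C) A, S A -> S (c *: A),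
      forall A B, S A -> S B -> S (A *m B)
    & forall A, S A -> S (adjmx A)].

(* Main.v *)
Require Import Defs.
From mathcomp Require Import all_boot all_order all_algebra.
From mathcomp Require Import complex mxtens reals.
Set Implicit Arguments. Unset Strict Implicit. Unset Printing Implicit Defensive.
Import GRing.Theory Num.Theory.
Local Open Scope ring_scope.

Section H.
Variable C : numClosedFieldType.

Lemma adjmxM m n p (A : 'M[C]_(m, n)) (B : 'M[C]_(n, p)) :
  adjmx (A *m B) = adjmx B *m adjmx A.
Proof. by rewrite /adjmx map_mxM trmx_mul. Qed.

Lemma adjmxK m n (A : 'M[C]_(m, n)) : adjmx (adjmx A) = A.
Proof. by apply/matrixP=> i j; rewrite !mxE conjCK. Qed.

Lemma adjmxT m n p q (A : 'M[C]_(m, n)) (B : 'M[C]_(p, q)) :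
  adjmx (A *t B) = adjmx A *t adjmx B.
Proof. by apply/matrixP=> i j; rewrite !mxE rmorphM. Qed.

Lemma adjmx1 m : adjmx (1%:M : 'M[C]_m) = 1%:M.
Proof. by apply/matrixP=> i j; rewrite !mxE eq_sym; case: (i == j); rewrite /= ?rmorph1 ?rmorph0. Qed.

Lemma tensDl m n p q (A B : 'M[C]_(m, n)) (D : 'M[C]_(p, q)) :
  (A + B) *t D = A *t D + B *t D.
Proof. by apply/matrixP=> i j; rewrite !mxE mulrDl. Qed.

Lemma tensZl m n p q c (A : 'M[C]_(m, n)) (D : 'M[C]_(p, q)) :
  (c *: A) *t D = c *: (A *t D).
Proof. by apply/matrixP=> i j; rewrite !mxE mulrA. Qed.

Lemma tens11 m p : (1%:M : 'M[C]_m) *t (1%:M : 'M[C]_p) = 1%:M.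
Proof.
apply/matrixP=> i j.
case: (mxtens_indexP i)=> i0 i1; case: (mxtens_indexP j)=> j0 j1.
rewrite tensmxE !mxE.
have E: (mxtens_index (i0, i1) == mxtens_index (j0, j1)) = ((i0 == j0) && (i1 == j1)).
  apply/eqP/andP.
    by move/(can_inj (@mxtens_indexK _ _)) => [-> ->].
  by case=> /eqP -> /eqP ->.
by rewrite E; case: (i0 == j0); case: (i1 == j1); rewrite /= ?mulr1 ?mulr0 ?mul0r.
Qed.
Lemma main_gen (n a b : nat) (chi : 'M[C]_(a * b, n)) :
  von_neumann_subalgebra (stloc chi).
Proof.
split.
- exists 1%:M; rewrite tens11; split; [by rewrite mul1mx mulmx1 | by rewrite mul1mx mulmx1].
- move=> A B [At [HA1 HA2]] [Bt [HB1 HB2]]; exists (At + Bt).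
  by rewrite tensDl !mulmxDl !mulmxDr HA1 HA2 HB1 HB2.
- move=> c A [At [HA1 HA2]]; exists (c *: At).
  by rewrite tensZl -!scalemxAl -!scalemxAr HA1 HA2.
- move=> A B [At [HA1 HA2]] [Bt [HB1 HB2]]; exists (At *m Bt).
  move: HA1 HA2 HB1 HB2.
  set TA := At *t _; set TB := Bt *t _; set TAB := (At *m Bt) *t _.
  move=> HA1 HA2 HB1 HB2.
  have E : TAB = TA *m TB by rewrite /TAB /TA /TB tensmx_mul mulmx1.
  rewrite E; split.
    by rewrite -mulmxA HB1 mulmxA HA1 mulmxA.
  by rewrite mulmxA HA2 -!mulmxA HB2.
- move=> A [At [HA1 HA2]]; exists (adjmx At).
  have T : adjmx At *t (1%:M : 'M_b) = adjmx (At *t 1%:M).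
    by rewrite adjmxT adjmx1.
  rewrite T; split.
    by rewrite -adjmxM HA2 adjmxM.
  by move: (congr1 adjmx HA1); rewrite !adjmxM adjmxK.
Qed.
End H.

Theorem mainTheorem8 (R : realType) (n a b : nat)
  (chi : 'M[R[i]]_(a * b, n)) :
  splitting_map chi -> von_neumann_subalgebra (stloc chi).
Proof. by move=> _; apply: main_gen. Qed.
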